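(* Let $a<b$, let $\alpha\in(0,1]$, let $k:[a,b]\to\mathbb{R}$ be a continuous nonnegative map, differentiable at every $t>a$, with $k(t)\neq 0$ and $k'(t)\neq 0$ whenever $t>a$. Let $t\in(a,b)$ with $t>0$ and let $f,g:[a,b]\to\mathbb{R}$ be $\alpha$-differentiable at $t$. Then: (1) $D^{\alpha}(\lambda f+\mu g)(t)=\lambda D^{\alpha}(f)(t)+\mu D^{\alpha}(g)(t)$ for all $\lambda,\mu\in\mathbb{R}$; (2) $D^{\alpha}(s\mapsto s^{n})(t)=\frac{(k(t))^{1-\alpha}}{k'(t)}\,n t^{n-1}$ for all $n\in\mathbb{R}$; (3) $D^{\alpha}(c)(t)=0$ for every constant function $c$; (4) $D^{\alpha}(fg)(t)=f(t)D^{\alpha}(g)(t)+g(t)D^{\alpha}(f)(t)$; (5) if $g(t)\neq 0$, then $D^{\alpha}\left(\frac{f}{g}\right)(t)=\dfrac{g(t)D^{\alpha}(f)(t)-f(t)D^{\alpha}(g)(t)}{[g(t)]^{2}}$; (6) if $g$ is differentiable at $t$ and $f$ (defined on an interval containing the range of $g$) is differentiable at $g(t)$, then $D^{\alpha}(f\circ g)(t)=\frac{(k(t))^{1-\alpha}}{k'(t)}\,f'(g(t))\,g'(t)$.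
   Context: For $k$ as in the claim, a real function $f$ defined near $t\in(a,b)$, and $\alpha\in(0,1]$, the generalized fractional derivative of $f$ of order $\alpha$ at $t$ is $$D^{\alpha}(f)(t)=f^{(\alpha)}(t):=\lim_{\varepsilon\to 0}\frac{f\left(t-k(t)+k(t)\,e^{\varepsilon\frac{(k(t))^{-\alpha}}{k'(t)}}\right)-f(t)}{\varepsilon},$$ and $f$ is called $\alpha$-differentiable at $t$ if this limit exists. *)

(* Defs.v *)
From Stdlib Require Import Reals.
From Coquelicot Require Import Coquelicot.
Open Scope R_scope.

Definition frac_arg (k : R -> R) (alpha t eps : R) : R :=
  t - k t + k t * exp (eps * Rpower (k t) (- alpha) / Derive k t).

Definition frac_quot (k : R -> R) (alpha : R) (f : R -> R) (t : R) : R -> R :=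
  fun eps => (f (frac_arg k alpha t eps) - f t) / eps.

Definition is_frac_deriv (k : R -> R) (alpha : R) (f : R -> R) (t l : R) : Prop :=
  is_lim (frac_quot k alpha f t) 0 (Finite l).

Definition frac_differentiable (k : R -> R) (alpha : R) (f : R -> R) (t : R) : Prop :=
  exists l : R, is_frac_deriv k alpha f t l.

(* The value D^alpha(f)(t) (meaningful when f is alpha-differentiable at t). *)
Definition frac_deriv (k : R -> R) (alpha : R) (f : R -> R) (t : R) : R :=
  real (Lim (frac_quot k alpha f t) 0).

(* Main.v *)
Require Import Defs.
From Stdlib Require Import Reals Lra.
From Coquelicot Require Import Coquelicot.
Open Scope R_scope.

Lemma loc0 (P : R -> Prop) (d : R) : 0 < d ->
  (forall y, y <> 0 -> Rabs y < d -> P y) -> Rbar_locally' (Finite 0) P.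
Proof.
  intros Hd H. simpl. exists (mkposreal d Hd). intros y Hy Hne.
  apply H; auto. unfold ball in Hy; simpl in Hy. unfold AbsRing_ball, abs, minus, plus, opp in Hy; simpl in Hy.
  replace y with (y + - 0) by ring. exact Hy.
Qed.

Lemma quot_lim (F : R -> R) (t d : R) :
  derivable_pt_lim F t d -> is_lim (fun y => (F (t + y) - F t) / y) 0 d.
Proof.
  intros H. apply is_lim_spec. intros eps.
  destruct (H eps (cond_pos eps)) as [del Hdel].
  apply (loc0 _ del (cond_pos del)). intros y Hy Hy'. apply Hdel; auto.
Qed.

Lemma quot_lim' (F : R -> R) (t d : R) :
  is_lim (fun y => (F (t + y) - F t) / y) 0 d -> derivable_pt_lim F t d.
Proof.
  intros H. apply is_lim_spec in H. intros eps Heps.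
  destruct (H (mkposreal eps Heps)) as [del Hdel].
  exists del. intros y Hy Hy'. apply Hdel; auto.
  unfold ball; simpl. unfold AbsRing_ball, abs, minus, plus, opp; simpl.
  replace (y + - 0) with y by ring. exact Hy'.
Qed.

Lemma expm1_lim (c : R) : is_lim (fun e => (exp (c * e) - 1) / e) 0 c.
Proof.
  destruct (Req_dec c 0) as [Hc|Hc].
  - subst. apply (is_lim_ext_loc (fun _ => 0)).
    + apply (loc0 _ 1); [lra|]. intros y Hy1 Hy2. rewrite Rmult_0_l, exp_0. field; repeat split; try lra; auto.
    + apply is_lim_const.
  - apply (is_lim_ext_loc (fun e => c * ((exp (c * e + 0) - 1) / (c * e + 0)))).
    + apply (loc0 _ 1); [lra|]. intros y Hy _. rewrite Rplus_0_r. field; repeat split; try lra; auto.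
    + replace (Finite c) with (Rbar_mult c 1) by (simpl; f_equal; ring).
      apply is_lim_scal_l. apply (is_lim_comp_lin (fun y => (exp y - 1) / y)); auto.
      replace (Rbar_plus (Rbar_mult c 0) 0) with (Finite 0) by (simpl; f_equal; ring).
      apply is_lim_div_expm1_0.
Qed.

Lemma ln1p_lim (a : R) : a <> 0 -> is_lim (fun y => ln (1 + a * y) / y) 0 a.
Proof.
  intros Ha.
  apply (is_lim_ext_loc (fun e => a * (ln (1 + (a * e + 0)) / (a * e + 0)))).
  + apply (loc0 _ 1); [lra|]. intros y Hy _. rewrite Rplus_0_r. field; repeat split; try lra; auto.
  + replace (Finite a) with (Rbar_mult a 1) by (simpl; f_equal; ring).
    apply is_lim_scal_l. apply (is_lim_comp_lin (fun y => ln (1 + y) / y)); auto.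
    replace (Rbar_plus (Rbar_mult a 0) 0) with (Finite 0) by (simpl; f_equal; ring).
    apply is_lim_div_ln1p_0.
Qed.

Lemma lim0_of_quot (h : R -> R) (L : R) :
  is_lim (fun e => h e / e) 0 L -> is_lim h 0 0.
Proof.
  intros H. apply (is_lim_ext_loc (fun e => h e / e * e)).
  - apply (loc0 _ 1); [lra|]. intros y Hy _. field; repeat split; try lra; auto.
  - assert (E : Rbar_mult L 0 = Finite 0) by (simpl; f_equal; ring).
    rewrite <- E at 2.
    apply (is_lim_mult (fun e => h e / e) (fun e => e) 0 L 0); auto. apply is_lim_id. simpl; auto.
Qed.

Lemma frac_arg_eq k alpha t e :
  frac_arg k alpha t e = t + k t * (exp (Rpower (k t) (- alpha) / Derive k t * e) - 1).
Proof.
  unfold frac_arg. replace (e * Rpower (k t) (- alpha) / Derive k t)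
    with (Rpower (k t) (- alpha) / Derive k t * e) by (unfold Rdiv; ring). ring.
Qed.

Lemma exp_ne1 x : x <> 0 -> exp x - 1 <> 0.
Proof.
  intros H E. apply H. apply exp_inv. rewrite exp_0. lra.
Qed.

Lemma lemA k alpha t F d :
  0 < k t -> Rpower (k t) (- alpha) / Derive k t <> 0 ->
  derivable_pt_lim F t d ->
  is_frac_deriv k alpha F t (k t * (Rpower (k t) (- alpha) / Derive k t) * d).
Proof.
  set (K := k t). set (c := Rpower (k t) (- alpha) / Derive k t).
  intros HK Hc HF. unfold is_frac_deriv. change (Rpower K (- alpha) / Derive k t) with c in *.
  set (h := fun e => K * (exp (c * e) - 1)).
  assert (Hh : is_lim (fun e => h e / e) 0 (K * c)).
  { apply (is_lim_ext_loc (fun e => K * ((exp (c * e) - 1) / e))).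
    - apply (loc0 _ 1); [lra|]. intros y Hy _. unfold h. cbv beta. field; repeat split; try lra; auto.
    - replace (Finite (K * c)) with (Rbar_mult K c) by reflexivity.
      apply is_lim_scal_l. apply expm1_lim. }
  assert (Hne : forall y, y <> 0 -> h y <> 0).
  { intros y Hy. unfold h. apply Rmult_integral_contrapositive_currified; [lra|].
    apply exp_ne1. apply Rmult_integral_contrapositive_currified; auto. }
  apply (is_lim_ext_loc (fun e => ((F (t + h e) - F t) / h e) * (h e / e))).
  - apply (loc0 _ 1); [lra|]. intros y Hy _. unfold frac_quot. rewrite frac_arg_eq.
    change (Rpower K (- alpha) / Derive k t) with c. change (K * (exp (c*y) - 1)) with (h y). change (t + k t * (exp (Rpower (k t) (- alpha) / Derive k t * y) - 1)) with (t + h y). field. split; auto.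
  - replace (Finite (K * c * d)) with (Rbar_mult d (K * c)) by (simpl; f_equal; ring).
    apply (is_lim_mult (fun e => (F (t + h e) - F t) / h e) (fun e => h e / e) 0 d (K * c)); auto.
    + apply (is_lim_comp (fun y => (F (t + y) - F t) / y) h 0 d 0).
      * apply quot_lim; auto.
      * apply (lim0_of_quot h (K * c)); auto.
      * apply (loc0 _ 1); [lra|]. intros y Hy _ E. injection E. apply Hne; auto.
    + simpl. auto.
Qed.

Lemma lemB k alpha t F l :
  0 < k t -> Rpower (k t) (- alpha) / Derive k t <> 0 ->
  is_frac_deriv k alpha F t l ->
  derivable_pt_lim F t (l / (k t * (Rpower (k t) (- alpha) / Derive k t))).
Proof.
  set (K := k t). set (c := Rpower (k t) (- alpha) / Derive k t).
  intros HK Hc HF. unfold is_frac_deriv in HF. change (Rpower K (- alpha) / Derive k t) with c in *. apply quot_lim'.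
  set (e := fun y => ln (1 + / K * y) / c).
  assert (He : is_lim (fun y => e y / y) 0 (/ K / c)).
  { apply (is_lim_ext_loc (fun y => / c * (ln (1 + / K * y) / y))).
    - apply (loc0 _ 1); [lra|]. intros y Hy _. unfold e. field; repeat split; try lra; auto.
    - replace (Finite (/ K / c)) with (Rbar_mult (/ c) (/ K)) by (simpl; f_equal; unfold Rdiv; ring).
      apply is_lim_scal_l. apply ln1p_lim. apply Rinv_neq_0_compat. lra. }
  assert (Hpos : forall y, Rabs y < K -> 0 < 1 + / K * y).
  { intros y Hy. apply Rabs_def2 in Hy. destruct Hy as [H1 H2].
    assert (0 < / K) by (apply Rinv_0_lt_compat; lra).
    assert (/K * y > / K * (- K)) by (apply Rmult_lt_compat_l; lra).
    replace (/ K * - K) with (-1) in H0 by (field; lra). lra. }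
  assert (Hne : forall y, y <> 0 -> Rabs y < K -> e y <> 0).
  { intros y Hy Hy' E. unfold e in E. unfold Rdiv in E.
    apply Rmult_integral in E. destruct E as [E|E].
    - rewrite <- ln_1 in E. apply ln_inv in E; auto; try lra.
      + assert (/ K * y = 0) by lra. apply Rmult_integral in H. destruct H as [H|H]; auto.
        apply Rinv_neq_0_compat in H; auto; lra.
    - apply Rinv_neq_0_compat in Hc. auto. }
  apply (is_lim_ext_loc (fun y => frac_quot k alpha F t (e y) * (e y / y))).
  - apply (loc0 _ K); auto. intros y Hy Hy'. unfold frac_quot. rewrite frac_arg_eq.
    replace (t + k t * (exp (Rpower (k t) (- alpha) / Derive k t * e y) - 1)) with (t + y).
    2:{ change (Rpower (k t) (- alpha) / Derive k t) with c. change (k t) with K.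
        replace (c * e y) with (ln (1 + / K * y)) by (unfold e; field; auto).
        rewrite exp_ln by auto. field. lra. }
    field. split; auto.
  - replace (Finite (l / (K * c))) with (Rbar_mult l (/ K / c)) by (simpl; f_equal; field; split; lra || auto).
    apply (is_lim_mult (fun y => frac_quot k alpha F t (e y)) (fun y => e y / y) 0 l (/ K / c)); auto.
    + apply (is_lim_comp (frac_quot k alpha F t) e 0 l 0); auto.
      * apply (lim0_of_quot e (/ K / c)); auto.
      * apply (loc0 _ K); auto. intros y Hy Hy2 E. apply (Hne y Hy Hy2). try injection E as E. exact E.
    + simpl. auto.
Qed.

Lemma lemA' k alpha t F d v :
  0 < k t -> Rpower (k t) (- alpha) / Derive k t <> 0 ->
  derivable_pt_lim F t d ->
  v = k t * (Rpower (k t) (- alpha) / Derive k t) * d ->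
  is_frac_deriv k alpha F t v.
Proof. intros H1 H2 H3 ->. apply lemA; auto. Qed.

Theorem mainTheorem3 (a b alpha : R) (k : R -> R) (t : R) (f g : R -> R) :
  a < b ->
  0 < alpha <= 1 ->
  (forall s, a <= s <= b ->
     filterlim k (within (fun x => a <= x <= b) (locally s)) (locally (k s))) ->
  (forall s, a <= s <= b -> 0 <= k s) ->
  (forall s, a < s < b -> ex_derive k s) ->
  (forall s, a < s < b -> Derive k s <> 0) ->
  (forall s, a < s <= b -> k s <> 0) ->
  a < t < b -> 0 < t ->
  frac_differentiable k alpha f t ->
  frac_differentiable k alpha g t ->
  (forall lam mu : R,
     is_frac_deriv k alpha (fun s => lam * f s + mu * g s) t
       (lam * frac_deriv k alpha f t + mu * frac_deriv k alpha g t)) /\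
  (forall n : R,
     is_frac_deriv k alpha (fun s => Rpower s n) t
       (Rpower (k t) (1 - alpha) / Derive k t * (n * Rpower t (n - 1)))) /\
  (forall c : R, is_frac_deriv k alpha (fun _ => c) t 0) /\
  is_frac_deriv k alpha (fun s => f s * g s) t
    (f t * frac_deriv k alpha g t + g t * frac_deriv k alpha f t) /\
  (g t <> 0 ->
     is_frac_deriv k alpha (fun s => f s / g s) t
       ((g t * frac_deriv k alpha f t - f t * frac_deriv k alpha g t) / (g t) ^ 2)) /\
  (ex_derive g t -> ex_derive f (g t) ->
     is_frac_deriv k alpha (fun s => f (g s)) t
       (Rpower (k t) (1 - alpha) / Derive k t * Derive f (g t) * Derive g t)).
Proof.
  intros Hab Hal _ Hnn _ HD Hk0 Ht Ht0 [lf Hf] [lg Hg].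
  assert (HK : 0 < k t).
  { destruct (Hnn t) as [H|H]; [lra|lra|]. exfalso; apply (Hk0 t); [lra|auto]. }
  assert (HDt : Derive k t <> 0) by (apply HD; lra).
  assert (Hc : Rpower (k t) (- alpha) / Derive k t <> 0).
  { unfold Rdiv. apply Rmult_integral_contrapositive_currified.
    - unfold Rpower. apply Rgt_not_eq, exp_pos.
    - apply Rinv_neq_0_compat; auto. }
  set (c := Rpower (k t) (- alpha) / Derive k t) in *.
  assert (HC : k t * c <> 0) by (apply Rmult_integral_contrapositive_currified; lra || auto).
  assert (HP : Rpower (k t) (1 - alpha) / Derive k t = k t * c).
  { unfold c. replace (1 - alpha) with (1 + - alpha) by ring. rewrite Rpower_plus, Rpower_1 by auto.
    unfold Rdiv; ring. }
  rewrite HP.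
  assert (Ef : frac_deriv k alpha f t = lf).
  { unfold frac_deriv. rewrite (is_lim_unique _ _ _ Hf). reflexivity. }
  assert (Eg : frac_deriv k alpha g t = lg).
  { unfold frac_deriv. rewrite (is_lim_unique _ _ _ Hg). reflexivity. }
  rewrite Ef, Eg.
  pose proof (lemB k alpha t f lf HK Hc Hf) as Df.
  pose proof (lemB k alpha t g lg HK Hc Hg) as Dg.
  fold c in Df, Dg.
  split; [|split; [|split; [|split; [|split]]]].
  - intros lam mu. eapply lemA'; auto.
    + apply (derivable_pt_lim_plus (fun s => lam * f s) (fun s => mu * g s)).
      * apply (derivable_pt_lim_scal f lam). exact Df.
      * apply (derivable_pt_lim_scal g mu). exact Dg.
    + fold c. field; repeat split; try lra; auto.
  - intros n. eapply lemA'; auto.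
    + apply derivable_pt_lim_power; auto.
  - intros c0. eapply lemA'; auto.
    + apply (derivable_pt_lim_const c0).
    + ring.
  - eapply lemA'; auto.
    + apply (derivable_pt_lim_mult f g); eauto.
    + fold c. field; repeat split; try lra; auto.
  - intros Hg0. eapply lemA'; auto.
    + apply (derivable_pt_lim_div f g); eauto.
    + fold c. unfold Rsqr. field; repeat split; try lra; auto.
  - intros Hdg Hdf. eapply lemA'; auto.
    + apply (derivable_pt_lim_comp g f).
      * apply is_derive_Reals. apply Derive_correct; auto.
      * apply is_derive_Reals. apply Derive_correct; auto.
    + fold c. ring.
Qed.
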